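(* Let $k \ge 1$ and $k \le m < 2k$. The number of Grassmannian involutions of $[m]$ that avoid $\operatorname{id}_k=12\cdots k$ is $\left\lfloor \frac{(2k-m)^2}{4}\right\rfloor$.
   Context: A permutation is Grassmannian if it has at most one descent; a Grassmannian involution is a Grassmannian permutation $\pi$ with $\pi^{-1}=\pi$. A permutation avoids $12\cdots k$ if it has no increasing subsequence of length $k$. *)

(* Defs.v *)
From mathcomp Require Import all_boot all_order all_fingroup.
Set Implicit Arguments. Unset Strict Implicit. Unset Printing Implicit Defensive.

Local Open Scope nat_scope.

(* Permutations of [m] are represented as {perm 'I_m} (positions 0..m-1). *)

Definition descents (m : nat) (pi : {perm 'I_m}) : {set 'I_m} :=
  [set i : 'I_m | [exists j : 'I_m, (val j == (val i).+1) && (pi j < pi i)]].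

Definition grassmannian (m : nat) (pi : {perm 'I_m}) : bool :=
  #|descents pi| <= 1.

Definition involution (m : nat) (pi : {perm 'I_m}) : bool :=
  (pi^-1)%g == pi.

Definition contains_id (k m : nat) (pi : {perm 'I_m}) : bool :=
  [exists t : k.-tuple 'I_m,
     sorted (fun i j : 'I_m => (i < j) && (pi i < pi j)) t].

Definition avoids_id (k m : nat) (pi : {perm 'I_m}) : bool :=
  ~~ contains_id k pi.

(* Main.v *)
Require Import Defs.
From mathcomp Require Import all_boot all_order all_fingroup zify.
Definition F (a b i : nat) : nat := if i < a then i else if i < a + b then i + b else if i < a + 2*b then i - b else i.

Lemma F_inv a b i : F a b (F a b i) = i.
Proof. rewrite {2}/F; repeat (case: ifP => ?); rewrite /F; repeat (case: ifP => ?); lia. Qed.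
Lemma F_desc a b i : F a b i.+1 < F a b i -> i.+1 = a + b.
Proof. rewrite /F; repeat (case: ifP => ?); lia. Qed.
Lemma F_lt a b m i : a + 2 * b <= m -> i < m -> F a b i < m.
Proof. rewrite /F; repeat (case: ifP => ?); lia. Qed.
Lemma F_inj a b a' b' m : 0 < b -> 0 < b' -> a + 2*b <= m -> a' + 2*b' <= m ->
  (forall i, i < m -> F a b i = F a' b' i) -> a = a' /\ b = b'.
Proof. move=> ? ? ? ? H. have h1 : F a b a = F a' b' a by apply: H; lia.
have h2 : F a b a' = F a' b' a' by apply: H; lia.
move: h1 h2; rewrite /F; repeat (case: ifP => ?); lia. Qed.

Lemma inc_gap (g : nat -> nat) l r : (forall i, l <= i -> i.+1 < r -> g i < g i.+1) ->
  forall i j, l <= i -> i <= j -> j < r -> g i + (j - i) <= g j.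
Proof.
move=> H i j li; elim: j => [|j IH] ij jr.
  have -> : i = 0 by lia. lia.
case: (ltnP j i) => h.
  have -> : i = j.+1 by lia. lia.
have := IH h (ltnW jr); have := H j (leq_trans li h) jr; lia.
Qed.

Lemma classify m (p : nat -> nat) :
 (forall i, i < m -> p i < m) -> (forall i, i < m -> p (p i) = i) ->
 (forall i j, i.+1 < m -> j.+1 < m -> p i.+1 < p i -> p j.+1 < p j -> i = j) ->
 exists a b, a + 2*b <= m /\ forall i, i < m -> p i = F a b i.
Proof.
move=> Hr Hi Hd.
have Hinj : forall i j, i < m -> j < m -> p i = p j -> i = j.
  by move=> i j im jm e; rewrite -(Hi i im) -(Hi j jm) e.
case: (boolP [exists d : 'I_m, (d.+1 < m) && (p d.+1 < p d)]).
- case/existsP => [[d dm]] /= /andP[d1 hd].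
  have asc : forall i, i.+1 < m -> i != d -> p i < p i.+1.
    move=> i im ne; case: (ltngtP (p i) (p i.+1)) => // h.
      by have := Hd i d im d1 h hd; move/eqP: ne.
    have := Hinj _ _ (ltnW im) im h; lia.
  have inc1 : forall i, 0 <= i -> i.+1 < d.+1 -> p i < p i.+1.
    move=> i _ h; apply: asc; lia.
  have inc2 : forall i, d.+1 <= i -> i.+1 < m -> p i < p i.+1.
    move=> i h h'; apply: asc; lia.
  have gap1 := @inc_gap p 0 d.+1 inc1; have gap2 := @inc_gap p d.+1 m inc2.
  have g1 : forall i, i <= d -> i <= p i.
    move=> i h; have := gap1 0 i (leq0n _) (leq0n _) h; lia.
  have g2 : forall i, d < i -> i < m -> p i <= i.
    move=> i h h'; have := gap2 i m.-1 h ltac:(lia) ltac:(lia); have := Hr m.-1 ltac:(lia); lia.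
  have pdd : p d != d.
    apply/eqP => e.
    have fx : forall i, i <= d -> p i = i.
      move=> i h; have := gap1 i d (leq0n _) h (leqnn _); have := g1 i h; lia.
    have j1 := Hi d.+1 d1. have jd : p d.+1 <= d by lia.
    have := fx _ jd; rewrite j1; lia.
  set q := p d.
  have pq : p q = d by apply: Hi; lia.
  have qm : q < m by apply: Hr; lia.
  have dq : d < q.
    case: (ltnP d q) => // h; have := g1 q h; rewrite pq; have := g1 d (leqnn _); move/eqP: pdd; lia.
  have iii_g : forall j, d < j -> j <= q -> p j + (q - j) <= d /\ p d.+1 + (j - d.+1) <= p j.
    move=> j h h'; split; first by rewrite -pq; apply: gap2; lia.
    by apply: gap2; lia.
  have i0d : p d.+1 <= d by have := iii_g d.+1 (ltnSn _) dq; lia.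
  have pi0 : p (p d.+1) = d.+1 by apply: Hi.
  have gi0 := gap1 (p d.+1) d (leq0n _) i0d (leqnn _). rewrite pi0 in gi0.
  have iii : forall j, d < j -> j <= q -> p j = j - (q - d).
    move=> j h h'; have := iii_g j h h'; lia.
  have ii : forall i, d.+1 - (q - d) <= i -> i <= d -> p i = i + (q - d).
    move=> i h h'; have e := iii (i + (q - d)) ltac:(lia) ltac:(lia).
    have := Hi (i + (q - d)) ltac:(lia); rewrite e addnK; by [].
  have i_ : forall i, i < d.+1 - (q - d) -> p i = i.
    move=> i h; have := g1 i ltac:(lia); have := gap1 i d (leq0n _) ltac:(lia) (leqnn _).
    have := Hi i ltac:(lia).
    case: (leqP (p i) d) => h2.
      by have := g1 _ h2; lia.
    move=> e G1 G2; have := iii _ h2 ltac:(rewrite -/q in G1; lia); rewrite e; lia.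
  have iv : forall i, q < i -> i < m -> p i = i.
    move=> i h h'; have := g2 i ltac:(lia) h'; have e := Hi i h'.
    case: (leqP (p i) d) => h2.
      case: (ltnP (p i) (d.+1 - (q - d))) => h3.
        by have := i_ _ h3; rewrite e; lia.
      by have := ii _ h3 h2; rewrite e; lia.
    case: (leqP (p i) q) => h3.
      by have := iii _ h2 h3; rewrite e; lia.
    have := g2 (p i) h2 (Hr i h'); rewrite e; lia.
  have bd : q - d <= d.+1 by have := iii_g d.+1 (ltnSn _) dq; lia.
  exists (d.+1 - (q - d)), (q - d); split; first by lia.
  move=> i im; rewrite /F.
  case: ifP => h1; first by apply: i_.
  case: ifP => h2; first by apply: ii; lia.
  case: ifP => h3; first by apply: iii; lia.
  by apply: iv; lia.
- move=> /existsPn Hn.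
  have asc : forall i, 0 <= i -> i.+1 < m -> p i < p i.+1.
    move=> i _ im; case: (ltngtP (p i) (p i.+1)) => // h.
      by have := Hn (Ordinal (ltnW im)); rewrite /= im h.
    have := Hinj _ _ (ltnW im) im h; lia.
  have gap := @inc_gap p 0 m asc.
  exists 0, 0; split => // i im.
  have := gap 0 i (leq0n _) (leq0n _) im; have := gap i m.-1 (leq0n _) ltac:(lia) ltac:(lia).
  have := Hr m.-1 ltac:(lia). rewrite /F /=; lia.
Qed.

Lemma sorted_mem_rel (T : eqType) (r : rel T) (s : seq T) x y :
  transitive r -> sorted r s -> x \in s -> y \in s -> x != y -> r x y || r y x.
Proof.
move=> tr; elim: s => // z s IH /= pz.
have ss : sorted r s := path_sorted pz.
have az := order_path_min tr pz.
rewrite !inE => /orP[/eqP->|xs] /orP[/eqP->|ys] ne.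
- by rewrite eqxx in ne.
- by rewrite (allP az).
- by rewrite (allP az) ?orbT.
- exact: IH.
Qed.

Lemma size_avoid_block (u : seq nat) m c b : uniq u -> (forall x, x \in u -> x < m) ->
  (forall x, x \in u -> ~~ (c <= x < c + b)) -> c + b <= m -> size u <= m - b.
Proof.
move=> uu um ub cb.
have := @uniq_leq_size _ u (filter (fun x => ~~ (c <= x < c + b)) (iota 0 m)) uu.
have sub : {subset u <= filter (fun x => ~~ (c <= x < c + b)) (iota 0 m)}.
  by move=> x xu; rewrite mem_filter ub // mem_iota add0n um.
move/(_ sub) => h; apply: (leq_trans h).
rewrite size_filter.
have -> : m = c + (b + (m - c - b)) by lia.
rewrite !iotaD !count_cat.
have -> : count (fun x => ~~ (c <= x < c + b)) (iota (0 + c) b) = 0.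
  rewrite (eq_in_count (a2 := pred0)) ?count_pred0 // => x.
  by rewrite mem_iota add0n /= => /andP[h1 h2]; rewrite h1 h2.
have := count_size (fun x => ~~ (c <= x < c + b)) (iota 0 c).
have := count_size (fun x => ~~ (c <= x < c + b)) (iota (0 + c + b) (m - c - b)).
rewrite !size_iota add0n => h1 h2; apply: leq_trans (leq_add h2 h1) _; lia.
Qed.

Section P.
Variables (k m a b : nat) (pi : {perm 'I_m}).
Hypothesis ab : a + 2 * b <= m.
Hypothesis hpi : forall i, (pi i : nat) = F a b i.

Lemma grass_F : grassmannian pi.
Proof.
rewrite /grassmannian; apply/card_le1_eqP => x y; rewrite !inE.
move=> /existsP[j /andP[/eqP ej hj]] /existsP[j' /andP[/eqP ej' hj']].
move: hj hj'; rewrite !hpi ej ej' => /F_desc h /F_desc h'; apply: ord_inj; move: h h'; simpl; lia.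
Qed.

Lemma inv_F : involution pi.
Proof.
have pp : forall i, pi (pi i) = i by move=> i; apply: val_inj; rewrite /= !hpi F_inv.
apply/eqP/permP => i; apply: (@perm_inj _ pi); by rewrite permKV pp.
Qed.

Lemma contains_F : k + b <= m -> contains_id k pi.
Proof.
move=> kb.
pose g := fun t => if t < a then t else t + b.
pose s := pmap (insub : nat -> option 'I_m) (map g (iota 0 k)).
have gm : all (fun x => x < m) (map g (iota 0 k)).
  apply/allP => x /mapP[t]; rewrite mem_iota => /andP[_ tk] ->; rewrite /g; case: ifP; lia.
have vs : map val s = map g (iota 0 k).
  rewrite (pmap_filter (insubK _)); apply/all_filterP.
  by apply: sub_all gm => x; rewrite isSome_insub.
have sz : size s == k by rewrite -(size_map val) vs size_map size_iota.
apply/existsP; exists (Tuple sz) => /=.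
have : sorted (fun u v => (u < v) && (F a b u < F a b v)) (map val s).
  rewrite vs sorted_map; apply: (sub_sorted _ (iota_ltn_sorted 0 k)) => u v /= uv.
  rewrite /g; case: (ltnP u a) => hu; case: (ltnP v a) => hv; rewrite /F;
    repeat (case: ifP => ?); lia.
rewrite sorted_map; apply: sub_sorted => x y /=; by rewrite !hpi.
Qed.

Lemma avoid_F : m < k + b -> avoids_id k pi.
Proof.
move=> mk; apply/negP => /existsP[t st].
pose u := map (fun x : 'I_m => nat_of_ord x) (tval t).
pose rn := fun x y => (x < y) && (F a b x < F a b y).
have su : sorted rn u.
  rewrite sorted_map; apply: sub_sorted st => x y /=; by rewrite !hpi.
have uu : uniq u.
  apply: (@sorted_uniq _ ltn ltn_trans ltnn).
  by apply: sub_sorted su => x y /andP[].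
have um : forall x, x \in u -> x < m by move=> x /mapP[y _ ->].
have szu : size u = k by rewrite size_map size_tuple.
have trn : transitive rn.
  move=> y x z /andP[h1 h2] /andP[h3 h4]; apply/andP; split; lia.
have key : (forall x, x \in u -> ~~ (a <= x < a + b)) \/ (forall x, x \in u -> ~~ (a + b <= x < a + b + b)).
  case: (boolP (has (fun x => a <= x < a + b) u)) => [/hasP[x xu hx]|/hasPn h]; last by left.
  right => y yu; apply/negP => hy.
  have xy : x != y by apply/eqP => e; move: hx hy; rewrite e; lia.
  have := @sorted_mem_rel _ rn u x y trn su xu yu xy; rewrite /rn /F.
  move: hx hy => /andP[hx1 hx2] /andP[hy1 hy2].
  repeat (case: ifP => ?); lia.
case: key => key.
  have := @size_avoid_block u m _ b uu um key ltac:(lia); lia.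
have := @size_avoid_block u m _ b uu um key ltac:(lia); lia.
Qed.
End P.
Lemma hsum2 n : \sum_(0 <= t < n) (n - t.*2.+1) = n^2 %/ 4 /\
  \sum_(0 <= t < n.+1) (n.+1 - t.*2.+1) = n.+1^2 %/ 4.
Proof.
elim: n => [|n [IH1 IH2]]; first by rewrite !big_nat_recr //= !big_geq.
split => //.
rewrite big_nat_recl //.
rewrite (eq_big_nat _ _ (F2 := fun t => n - t.*2.+1)); last by move=> t _; lia.
rewrite big_nat_recr //= IH1; lia.
Qed.
Lemma hsumK n K : n <= K -> \sum_(0 <= t < K) (n - t.*2.+1) = n^2 %/ 4.
Proof.
move=> nK; rewrite (big_cat_nat _ (n := n)) //= (proj1 (hsum2 n)).
rewrite big_nat_cond big1 ?addn0 // => t /andP[/andP[h _] _]; lia.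
Qed.
Lemma cnt n t : \sum_(a < n) (if a < t then 1 else 0) = minn t n.
Proof.
elim: n => [|n IH]; first by rewrite big_ord0; lia.
rewrite big_ord_recr /= IH; case: ifP; lia.
Qed.
Lemma countD k m : k <= m -> m < 2 * k ->
  #|[set p : 'I_m.+1 * 'I_m.+1 | (m - k < p.1) && (p.2 + 2 * p.1 <= m)]| = (2 * k - m) ^ 2 %/ 4.
Proof.
move=> km mk.
set D := [set p : 'I_m.+1 * 'I_m.+1 | _].
rewrite -sum1_card big_mkcond /=.
have -> : \sum_(p : 'I_m.+1 * 'I_m.+1) (if p \in D then 1 else 0) =
   \sum_(b < m.+1) \sum_(a < m.+1) (if (b, a) \in D then 1 else 0).
  by rewrite pair_bigA; apply: eq_bigr => -[].
rewrite (eq_bigr (fun b : 'I_m.+1 => (m - k < b) * (m.+1 - 2 * b))); last first.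
  move=> b _; under eq_bigr do rewrite inE /=.
  case: (ltnP (m - k) b) => hb /=; last by rewrite big1.
  rewrite (eq_bigr (fun a : 'I_m.+1 => if a < m.+1 - 2 * b then 1 else 0)).
    by rewrite cnt; lia.
  move=> a _; have -> : (a + 2 * b <= m) = (a < m.+1 - 2 * b) by apply/idP/idP; lia.
  by [].
rewrite -(big_mkord xpredT (fun b => (m - k < b) * (m.+1 - 2 * b))).
rewrite (big_cat_nat _ (n := (m - k).+1)) //=; last by lia.
rewrite big_nat_cond big1 ?add0n; last by move=> t /andP[/andP[_ h] _]; lia.
rewrite -{1}(add0n (m - k).+1) big_addn.
rewrite (eq_big_nat _ _ (F2 := fun t => (2 * k - m) - t.*2.+1)); last by move=> t _; lia.
apply: hsumK; lia.
Qed.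

Definition fF m a b (i : 'I_m) : 'I_m := if a + 2 * b <= m then insubd i (F a b i) else i.
Lemma fF_val m a b (i : 'I_m) : a + 2 * b <= m -> (fF m a b i : nat) = F a b i.
Proof. move=> h; rewrite /fF h; have := val_insubd i (F a b i); rewrite /= => ->; by rewrite (F_lt a b m i h (ltn_ord i)). Qed.
Lemma fF_inv m a b (i : 'I_m) : fF m a b (fF m a b i) = i.
Proof.
case: (boolP (a + 2 * b <= m)) => h; last by rewrite /fF (negbTE h).
by apply: ord_inj; rewrite !fF_val // F_inv.
Qed.
Definition fperm m a b : {perm 'I_m} := perm (can_inj (@fF_inv m a b)).
Lemma fperm_val m a b (i : 'I_m) : a + 2 * b <= m -> (fperm m a b i : nat) = F a b i.
Proof. by move=> h; rewrite permE fF_val. Qed.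

Theorem mainTheorem18 (k m : nat) (hk : 1 <= k) (hkm : k <= m) (hm : m < 2 * k) :
  #|[set pi : {perm 'I_m} | [&& grassmannian pi, involution pi & avoids_id k pi]]|
  = (2 * k - m) ^ 2 %/ 4.
Proof.
set D := [set p : 'I_m.+1 * 'I_m.+1 | (m - k < p.1) && (p.2 + 2 * p.1 <= m)].
have -> : [set pi : {perm 'I_m} | [&& grassmannian pi, involution pi & avoids_id k pi]]
   = [set fperm m p.2 p.1 | p : 'I_m.+1 * 'I_m.+1 in D].
  apply/setP => pi; rewrite inE; apply/idP/imsetP.
  - case/and3P => gr iv av.
    pose pn := fun i => if (insub i : option 'I_m) is Some j then nat_of_ord (pi j) else i.
    have pnE : forall j : 'I_m, pn j = pi j by move=> j; rewrite /pn valK.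
    have pp : forall j, pi (pi j) = j by move=> j; move/eqP: iv => iv; rewrite -{1}iv permK.
    have [a [b [ab eq]]] : exists a b, a + 2 * b <= m /\ forall i, i < m -> pn i = F a b i.
      apply: classify.
      + by move=> i im; rewrite -[i]/(nat_of_ord (Ordinal im)) pnE ltn_ord.
      + by move=> i im; rewrite -[i]/(nat_of_ord (Ordinal im)) !pnE pp.
      + move=> i j im jm hi hj.
        have di : Ordinal (ltnW im) \in descents pi.
          rewrite inE; apply/existsP; exists (Ordinal im) => /=; rewrite eqxx /=.
          by move: hi; rewrite -[i.+1]/(nat_of_ord (Ordinal im)) -[i]/(nat_of_ord (Ordinal (ltnW im))) !pnE.
        have dj : Ordinal (ltnW jm) \in descents pi.
          rewrite inE; apply/existsP; exists (Ordinal jm) => /=; rewrite eqxx /=.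
          by move: hj; rewrite -[j.+1]/(nat_of_ord (Ordinal jm)) -[j]/(nat_of_ord (Ordinal (ltnW jm))) !pnE.
        by move/card_le1_eqP: gr => gr; have := gr _ _ di dj => /(congr1 val).
    have hpi : forall i : 'I_m, (pi i : nat) = F a b i by move=> i; rewrite -pnE eq.
    have am : a < m.+1 by lia.
    have bm : b < m.+1 by lia.
    exists (Ordinal bm, Ordinal am).
      rewrite inE /= ab andbT ltnNge; apply/negP => hb.
      have := @contains_F k m a b pi ab hpi ltac:(lia).
      by move: av; rewrite /avoids_id => /negP.
    by apply/permP => i; apply: ord_inj; rewrite /= hpi fperm_val.
  - case => -[b a]; rewrite inE /= => /andP[h1 h2] ->.
    have hp : forall i : 'I_m, (fperm m a b i : nat) = F a b i by move=> i; apply: fperm_val.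
    by rewrite (@grass_F m a b _ h2 hp) (@inv_F m a b _ hp) (@avoid_F k m a b _ h2 hp ltac:(lia)).
rewrite card_in_imset ?countD //.
move=> [b a] [b' a']; rewrite !inE /= => /andP[h1 h2] /andP[h1' h2'] e.
have [e1 e2] : (a : nat) = a' /\ (b : nat) = b'.
  apply: (@F_inj a b a' b' m) => //; try lia.
  move=> i im; by rewrite -(@fperm_val m a b (Ordinal im) h2) -(@fperm_val m a' b' (Ordinal im) h2') e.
by congr pair; apply: val_inj.
Qed.
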